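(* Let $G_1$ be an $r_1$-regular finite simple graph and $G_2$ an $r_2$-regular finite simple graph with $r_1>r_2$, and let $p_i=|V(G_i)|$, $q_i=|E(G_i)|$ for $i=1,2$. Then $$\nu^*(G_1\sqcup G_2)=\nu^*(G_1)+\nu^*(G_2)+2q_1(p_2+q_2),$$ where $\sqcup$ denotes disjoint union.
   Context: For a finite simple graph $G=(V,E)$ with $\ell=|V|+|E|$, a construction sequence (c-sequence) is a bijection $x:\{1,\dots,\ell\}\to V\sqcup E$ such that every edge $e=uw$ satisfies $x^{-1}(e)>\max\{x^{-1}(u),x^{-1}(w)\}$. The cost of $x$ is $\nu(x)=\sum_{e=uw\in E}\big(2x^{-1}(e)-x^{-1}(u)-x^{-1}(w)\big)$, and $\nu^*(G)$ is the maximum of $\nu(x)$ over all c-sequences for $G$. *)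

(* Defs.v *)
From mathcomp Require Import all_boot.
Set Implicit Arguments. Unset Strict Implicit. Unset Printing Implicit Defensive.

Section Graphs.
Variable T : finType.
Variable e : rel T.

Definition simple_graph := symmetric e /\ irreflexive e.

Definition regular (r : nat) := forall v : T, #|[set w | e v w]| = r.

Definition is_edge (A : {set T}) : bool :=
  [exists u, exists w, e u w && (A == [set u; w])].
Definition edge := {A : {set T} | is_edge A}.

Definition elt := (T + edge)%type.
Definition ell := #|T| + #|{: edge}|.

(* For a sequence x listing V ⊔ E, x^{-1}(a) (1-indexed position). *)
Definition pos (x : seq elt) (a : elt) : nat := (index a x).+1.

(* A c-sequence: a bijection {1..ell} -> V ⊔ E (a duplicate-free ell-tuple,
   ell = |V ⊔ E|), each edge placed after both endpoints. *)
Definition is_cseq (x : ell.-tuple elt) : bool :=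
  uniq x &&
  [forall A : edge, forall u in val A, pos x (inl u) < pos x (inr A)].

Definition cost (x : seq elt) : nat :=
  \sum_(A : edge) (2 * pos x (inr A) - \sum_(u in val A) pos x (inl u)).

Definition nu_star : nat := \max_(x : ell.-tuple elt | is_cseq x) cost x.

End Graphs.

Definition sum_rel (T1 T2 : finType) (e1 : rel T1) (e2 : rel T2) : rel (T1 + T2) :=
  fun a b => match a, b with
             | inl x, inl y => e1 x y
             | inr x, inr y => e2 x y
             | _, _ => false
             end.

(* Main.v *)
Require Import Defs.
From mathcomp Require Import all_boot zify.
Set Implicit Arguments. Unset Strict Implicit. Unset Printing Implicit Defensive.

Definition tri n := \sum_(i < n) i.+1.

Lemma tri2 n : 2 * tri n = n * n.+1.
Proof. elim: n => [|n IH]; first by rewrite /tri big_ord0.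
rewrite /tri big_ord_recr /= mulnDr -/(tri n) IH; lia. Qed.

Lemma sum_index (I : eqType) (s : seq I) (G : nat -> nat) : uniq s ->
  \sum_(v <- s) G (index v s) = \sum_(i < size s) G i.
Proof.
elim: s G => [|a s IH] G /=; first by rewrite big_nil big_ord0.
case/andP=> ans us; rewrite big_cons big_ord_recl /= eqxx; congr (_ + _).
rewrite -(IH (fun i => G i.+1)) //; apply: eq_big_seq => v vs.
have -> : (a == v) = false by apply/eqP => av; move: ans; rewrite av vs.
by [].
Qed.

Lemma sum_uniq_ge B (s : seq nat) : uniq s -> all (fun i => i < B) s ->
  \sum_(i < size s) i <= sumn s.
Proof.
elim: B s => [|B IH] s us.
  by case: s us => [|a s] //= _; rewrite big_ord0.
move=> alls; case Bs: (B \in s); last first.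
  apply: IH => //; apply/allP => i iS; have := allP alls i iS.
  rewrite ltnS leq_eqVlt; case/orP => // /eqP ib; by rewrite -ib iS in Bs.
have pr := perm_to_rem Bs.
rewrite (perm_sumn pr) (perm_size pr) /= big_ord_recr /=.
have ur : uniq (rem B s) by apply: rem_uniq.
have allr : all (fun i => i < B) (rem B s).
  apply/allP => i ir; have := allP alls i (mem_rem ir).
  rewrite ltnS leq_eqVlt; case/orP => // /eqP ib.
  by move: ir; rewrite ib mem_rem_uniqF.
have := IH _ ur allr.
have : size (rem B s) <= B.
  have := @uniq_leq_size _ (rem B s) (iota 0 B) ur.
  rewrite size_iota; apply => i /(allP allr).
  by rewrite mem_iota.
move=> h1 h2; rewrite -addnC; apply: leq_add => //; lia.
Qed.


Section G.
Variable T : finType.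
Variable e : rel T.
Hypothesis sg : simple_graph e.

Definition deg v := #|[set w | e v w]|.

Lemma edge_inv (A : edge e) : exists a b, e a b /\ val A = [set a; b].
Proof. case: A => A /= /existsP [a /existsP [b /andP [eab /eqP ->]]]; by exists a, b. Qed.

Lemma card_edges_at u : #|[pred A : edge e | u \in val A]| = deg u.
Proof.
case: sg => sym irr.
rewrite -(card_imset _ val_inj).
have -> : val @: [pred A : edge e | u \in val A] =
          (fun w => [set u; w]) @: [set w | e u w].
  apply/setP => B; apply/imsetP/imsetP.
  - case=> A; rewrite inE => uA ->.
    have [a [b [eab vA]]] := edge_inv A.
    move: uA; rewrite vA !inE => /orP [] /eqP ->.
      by exists b; rewrite ?inE.
    by exists a; [rewrite inE sym | rewrite setUC].
  - case=> w; rewrite inE => euw ->.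
    have h : is_edge e [set u; w] by apply/existsP; exists u; apply/existsP; exists w; rewrite euw eqxx.
    by exists (exist (fun B => is_edge e B) _ h) => //; rewrite inE /= set21.
rewrite card_in_imset // => w1 w2; rewrite !inE => e1 e2 eq.
have : w1 \in [set u; w2] by rewrite -eq set22.
rewrite !inE => /orP [] /eqP // w1u.
by move: e1; rewrite w1u irr.
Qed.

Lemma double_count (f : T -> nat) :
  \sum_(A : edge e) \sum_(u in val A) f u = \sum_u deg u * f u.
Proof.
rewrite (exchange_big_dep xpredT) //=; apply: eq_bigr => u _.
rewrite -card_edges_at -sum_nat_const.
by apply: eq_bigl => A; rewrite inE.
Qed.

Lemma handshake : \sum_u deg u = 2 * #|{: edge e}|.
Proof.
case: sg => sym irr.
have := double_count (fun _ => 1).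
under eq_bigr => u _ do rewrite muln1.
move <-; rewrite mulnC -sum_nat_const; apply: eq_bigr => A _.
rewrite sum_nat_const muln1.
have [a [b [eab ->]]] := edge_inv A.
rewrite cards2; case: eqP => // ab; by move: eab; rewrite ab irr.
Qed.

End G.

Lemma triE n : tri n = \sum_(i < n) i + n.
Proof. rewrite /tri; under eq_bigr do rewrite -addn1.
by rewrite big_split /= sum_nat_const card_ord muln1. Qed.

Section G.
Variable T : finType.
Variable e : rel T.
Hypothesis sg : simple_graph e.

Lemma cseq_mem (x : (ell e).-tuple (elt e)) : is_cseq x -> perm_eq x (enum {: elt e}).
Proof.
case/andP => ux _.
have hs : size (enum {: elt e}) <= size x by rewrite size_tuple -cardE card_sum.
have [_ h] := uniq_min_size ux (fun a _ => mem_enum _ a) hs.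
apply: uniq_perm => //. all: try exact: enum_uniq. all: by move=> a; rewrite h.
Qed.

Lemma cseq_in (x : (ell e).-tuple (elt e)) a : is_cseq x -> a \in x.
Proof. by move/cseq_mem/perm_mem => ->; rewrite mem_enum. Qed.

Lemma sum_pos_all (x : (ell e).-tuple (elt e)) : is_cseq x ->
  \sum_(a : elt e) pos x a = tri (ell e).
Proof.
move=> cx; rewrite -big_enum -(perm_big _ (cseq_mem cx)) /pos.
rewrite (sum_index (fun i => i.+1)) ?size_tuple //.
by case/andP: cx.
Qed.

Lemma pos_lb (U : finType) (g : U -> elt e) (x : (ell e).-tuple (elt e)) :
  injective g -> is_cseq x -> tri #|U| <= \sum_(u : U) pos x (g u).
Proof.
move=> ig cx.
set s := [seq index (g u) x | u <- enum U].
have us : uniq s.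
  rewrite map_inj_in_uniq ?enum_uniq // => u v _ _ h.
  apply: ig; by rewrite -(nth_index (g u) (cseq_in (g u) cx)) h nth_index // cseq_in.
have := sum_uniq_ge (B := size x) us.
have -> : all (fun i => i < size x) s.
  by apply/allP => i /mapP [u _ ->]; rewrite index_mem cseq_in.
rewrite size_map -cardE triE /pos.
under eq_bigr do rewrite -addn1.
rewrite big_split /= sum_nat_const muln1.
have -> : sumn s = \sum_(u : U) index (g u) x.
  by rewrite /s sumnE big_map big_enum.
move=> /(_ isT) h; by rewrite leq_add2r.
Qed.

Lemma cost_id (x : (ell e).-tuple (elt e)) : is_cseq x ->
  cost x + \sum_v deg e v * pos x (inl v) = 2 * \sum_(A : edge e) pos x (inr A).
Proof.
move=> cx; rewrite -(double_count sg) /cost -big_split /= big_distrr /=.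
apply: eq_bigr => A _; rewrite subnK //.
case/andP: cx => _ /forallP /(_ A) /forall_inP h.
apply: (@leq_trans (\sum_(u in val A) pos x (inr A))).
  by apply: leq_sum => u /h /ltnW.
rewrite sum_nat_const; apply: leq_mul => //; have [a [b [_ ->]]] := edge_inv A.
by rewrite cards2; case: (a != b).
Qed.

End G.


Section G.
Variable T : finType.
Variable e : rel T.
Hypothesis sg : simple_graph e.

Lemma key (x : (ell e).-tuple (elt e)) : is_cseq x ->
  cost x + \sum_v (deg e v).+2 * pos x (inl v) = 2 * tri (ell e).
Proof.
move=> cx; rewrite -(sum_pos_all cx) big_sumType /= mulnDr -(cost_id sg cx).
under eq_bigr do rewrite -addn2 mulnDl.
by rewrite big_split /= -big_distrr /= addnA [RHS]addnC.
Qed.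

Definition zseq (s : seq T) : seq (elt e) :=
  map inl s ++ map inr (enum {: edge e}).

Lemma zseq_ok (s : seq T) : uniq s -> size s = #|T| ->
  exists z : (ell e).-tuple (elt e), is_cseq z /\
    forall v, v \in s -> pos z (inl v) = (index v s).+1.
Proof.
move=> us ss.
have hz : size (zseq s) == ell e.
  by rewrite /zseq size_cat !size_map ss -enumT -cardE.
have pv : forall v, v \in s -> pos (zseq s) (inl v) = (index v s).+1.
  move=> v vs; rewrite /pos /zseq index_cat.
  have -> : @inl T (edge e) v \in map (@inl T (edge e)) s by rewrite mem_map // => a b [].
  by rewrite index_map //; move=> a b [].
exists (Tuple hz); split => //; apply/andP; split.
  rewrite /= /zseq cat_uniq !map_inj_uniq ?us //=; try by move=> a b [].
  rewrite -enumT enum_uniq andbT.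
  by apply/hasPn => a /mapP [A _ ->]; apply/mapP => [[v _]].
apply/forallP => A; apply/forall_inP => u _.
have vs : u \in s.
  have hs : size (enum T) <= size s by rewrite ss cardE.
  have [_ h] := uniq_min_size us (fun a _ => mem_enum _ a) hs.
  by rewrite h mem_enum.
rewrite /= pv // /pos /zseq index_cat.
have -> : (inr A \in map inl s) = false by apply/mapP => [[v _]].
rewrite size_map index_map; last by move=> a b [].
by rewrite ltnS ltn_addr // index_mem.
Qed.

End G.


Lemma tri_add a b : tri (a + b) = tri a + tri b + a * b.
Proof. have h1 := tri2 (a + b); have h2 := tri2 a; have h3 := tri2 b. nia. Qed.

Lemma sum_index_fin (U : finType) (s : seq U) : uniq s -> (forall v, v \in s) ->
  \sum_(v : U) (index v s).+1 = tri (size s).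
Proof.
move=> us alls; rewrite -big_enum.
rewrite (perm_big s); last by apply: uniq_perm => // [|v]; [exact: enum_uniq | by rewrite mem_enum alls].
by rewrite (sum_index (fun i => i.+1)).
Qed.

Section G.
Variable T : finType.
Variable e : rel T.
Hypothesis sg : simple_graph e.

Lemma nu_bounds (K C : nat) (z : (ell e).-tuple (elt e)) :
  is_cseq z -> @cost _ e z + K = C ->
  (forall x : (ell e).-tuple (elt e), is_cseq x -> @cost _ e x + K <= C) ->
  nu_star e + K = C.
Proof.
move=> cz hz h; apply/eqP; rewrite eqn_leq; apply/andP; split.
  have : nu_star e <= C - K by apply/bigmax_leqP => x cx; have := h x cx; lia.
  lia.
have := @leq_bigmax_cond _ (fun x => is_cseq x) (fun x : (ell e).-tuple (elt e) => cost x) z cz; rewrite -/(nu_star e); lia.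
Qed.

End G.


Section G.
Variable T : finType.
Variable e : rel T.
Hypothesis sg : simple_graph e.
Variable r : nat.
Hypothesis reg : regular e r.

Lemma key_reg (x : (ell e).-tuple (elt e)) : is_cseq x ->
  cost x + r.+2 * \sum_v pos x (inl v) = 2 * tri (ell e).
Proof.
move=> cx; rewrite -(key sg cx) big_distrr /=; congr (_ + _).
by apply: eq_bigr => v _; rewrite /deg reg.
Qed.

Lemma nu_reg : nu_star e + r.+2 * tri #|T| = 2 * tri (ell e).
Proof.
have [z [cz pz]] := zseq_ok e (enum_uniq T) (esym (cardE T)).
apply: (nu_bounds cz).
  rewrite -(key_reg cz); congr (_ + (_ * _)).
  rewrite cardE -sum_index_fin ?enum_uniq //; last by move=> v; rewrite mem_enum.
  by apply: eq_bigr => v _; rewrite pz // mem_enum.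
move=> x cx; rewrite -(key_reg cx) leq_add2l leq_mul2l.
by rewrite (pos_lb (g := inl)) ?orbT // => a b [].
Qed.

Lemma handshake_reg : r * #|T| = 2 * #|{: edge e}|.
Proof.
rewrite -(handshake sg) mulnC -sum_nat_const.
by apply: eq_bigr => v _; rewrite /deg reg.
Qed.

End G.


Section U.
Variables (T1 T2 : finType) (e1 : rel T1) (e2 : rel T2) (r1 r2 : nat).
Hypotheses (sg1 : simple_graph e1) (sg2 : simple_graph e2).
Hypotheses (reg1 : regular e1 r1) (reg2 : regular e2 r2) (lr : r2 <= r1).

Let E := sum_rel e1 e2.

Lemma sg_sum : simple_graph E.
Proof.
case: sg1 => s1 i1; case: sg2 => s2 i2; split.
  by case=> a [] b //=; rewrite ?s1 ?s2.
by case=> a /=; rewrite ?i1 ?i2.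
Qed.

Lemma deg_inl v : deg E (inl v) = r1.
Proof.
rewrite /deg -(reg1 v) -(card_imset _ (@inl_inj T1 T2)); apply: eq_card => -[w|w]; rewrite !inE.
  by rewrite mem_imset ?inE //; exact: inl_inj.
by apply/esym/imsetP => -[y _].
Qed.

Lemma deg_inr v : deg E (inr v) = r2.
Proof.
rewrite /deg -(reg2 v) -(card_imset _ (@inr_inj T1 T2)); apply: eq_card => -[w|w]; rewrite !inE.
  by apply/esym/imsetP => -[y _].
by rewrite mem_imset ?inE //; exact: inr_inj.
Qed.

Lemma key_union (x : (ell E).-tuple (elt E)) : is_cseq x ->
  cost x + (r1.+2 * \sum_(v : T1) pos x (inl (inl v)) +
            r2.+2 * \sum_(v : T2) pos x (inl (inr v))) = 2 * tri (ell E).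
Proof.
move=> cx; rewrite -(key sg_sum cx) big_sumType /= !big_distrr /=.
congr (_ + (_ + _)); apply: eq_bigr => v _; by rewrite ?deg_inl ?deg_inr.
Qed.

Lemma nu_union : nu_star E + (r2.+2 * tri (#|T1| + #|T2|) + (r1 - r2) * tri #|T1|)
   = 2 * tri (ell E).
Proof.
set s := map inl (enum T1) ++ map inr (enum T2).
have us : uniq s.
  rewrite cat_uniq (map_inj_uniq (@inl_inj _ _)) (map_inj_uniq (@inr_inj _ _)).
  rewrite !enum_uniq andbT /=.
  by apply/hasPn => a /mapP [y _ ->]; apply/mapP => -[w _].
have ss : size s = #|{: T1 + T2}| by rewrite card_sum !cardE size_cat !size_map.
have alls : forall v, v \in s.
  by move=> [v|v]; rewrite mem_cat ?orbT; [rewrite mem_map ?mem_enum //; exact: inl_inj | rewrite orbC mem_map ?mem_enum //; exact: inr_inj].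
have [z [cz pz]] := zseq_ok E us ss.
have P1z : \sum_(v : T1) pos z (inl (inl v)) = tri #|T1|.
  rewrite cardE -sum_index_fin ?enum_uniq //; last by move=> v; rewrite mem_enum.
  apply: eq_bigr => v _; rewrite pz // index_cat.
  have -> : (@inl T1 T2 v) \in map inl (enum T1) by rewrite mem_map ?mem_enum //; exact: inl_inj.
  by rewrite index_map //; exact: inl_inj.
have Pz : \sum_(v : T1 + T2) pos z (inl v) = tri (#|T1| + #|T2|).
  rewrite -card_sum -ss -sum_index_fin //.
  by apply: eq_bigr => v _; rewrite pz.
have PzS : \sum_(v : T1 + T2) pos z (inl v) =
   \sum_(v : T1) pos z (inl (inl v)) + \sum_(v : T2) pos z (inl (inr v)).
  by rewrite big_sumType.
apply: (nu_bounds cz).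
  rewrite -(key_union cz); congr (_ + _).
  move: Pz; rewrite PzS P1z.
  set P2 := \sum_(v : T2) _; move=> h.
  have -> : r1 = r2 + (r1 - r2) by lia.
  nia.
move=> x cx; rewrite -(key_union cx) leq_add2l.
have h1 : tri #|T1| <= \sum_(v : T1) pos x (inl (inl v)).
  by apply: pos_lb => // a b; case.
have h2 : tri #|{: T1 + T2}| <= \sum_(v : T1 + T2) pos x (inl v).
  by apply: pos_lb => // a b [].
move: h2; rewrite big_sumType card_sum.
set P1 := \sum_(v : T1) _; set P2 := \sum_(v : T2) _ => /= h2.
have a1 : r2.+2 * tri (#|T1| + #|T2|) <= r2.+2 * (P1 + P2) by rewrite leq_mul2l h2 orbT.
have a2 : (r1 - r2) * tri #|T1| <= (r1 - r2) * P1 by rewrite leq_mul2l h1 orbT.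
have a3 : r1.+2 * P1 + r2.+2 * P2 = r2.+2 * (P1 + P2) + (r1 - r2) * P1.
  have [d hd] : exists d, r1 = r2 + d by exists (r1 - r2); lia.
  rewrite hd addKn; nia.
rewrite a3; apply: leq_add => //.
Qed.

End U.

Unset Implicit Arguments. Set Strict Implicit.

Theorem theorem5 (T1 T2 : finType) (e1 : rel T1) (e2 : rel T2) (r1 r2 : nat) :
  simple_graph e1 -> simple_graph e2 ->
  regular e1 r1 -> regular e2 r2 -> r2 < r1 ->
  nu_star (sum_rel e1 e2) =
    nu_star e1 + nu_star e2
    + 2 * #|{: edge e1}| * (#|T2| + #|{: edge e2}|).
Proof.
move=> sg1 sg2 reg1 reg2 lr.
have n1 := nu_reg sg1 reg1.
have n2 := nu_reg sg2 reg2.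
have n := nu_union sg1 sg2 reg1 reg2 (ltnW lr).
have h1 := handshake_reg sg1 reg1.
have h2 := handshake_reg sg2 reg2.
have hu := handshake (sg_sum sg1 sg2).
rewrite big_sumType /= in hu.
have hu1 : \sum_(v : T1) deg (sum_rel e1 e2) (inl v) = r1 * #|T1|.
  by rewrite mulnC -sum_nat_const; apply: eq_bigr => v _; rewrite (deg_inl e2 reg1).
have hu2 : \sum_(v : T2) deg (sum_rel e1 e2) (inr v) = r2 * #|T2|.
  by rewrite mulnC -sum_nat_const; apply: eq_bigr => v _; rewrite (deg_inr e1 reg2).
rewrite hu1 hu2 in hu.
have hq : #|{: edge (sum_rel e1 e2)}| = #|{: edge e1}| + #|{: edge e2}| by lia.
have hl : ell (sum_rel e1 e2) = ell e1 + ell e2.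
  by rewrite /ell card_sum hq; lia.
rewrite hl tri_add tri_add in n.
move: n n1 n2 h2; rewrite /ell.
set p1 := #|T1|; set p2 := #|T2|; set q1 := #|{: edge e1}|; set q2 := #|{: edge e2}|.
have [d ->] : exists d, r1 = r2 + d by exists (r1 - r2); lia.
rewrite addKn => n n1 n2 h2.
have h2' : p1 * (r2 * p2) = p1 * (2 * q2) by rewrite h2.
nia.
Qed.
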